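(* Let $G=\langle c,s\rangle$, $K$, $z$, $b^{(i)}$ and $\phi:H\to G$ be as in the context. Let $w=s^{\alpha_0}c^{\beta_1}s^{\alpha_1}c^{\beta_2}\cdots s^{\alpha_{n-1}}c^{\beta_n}s^{\alpha_n}$, where $n\ge1$, $\alpha_0,\ldots,\alpha_n,\beta_1,\ldots,\beta_n$ are integers, all nonzero except possibly $\alpha_0$ and $\alpha_n$. Put $\gamma=\sum_{i=0}^{n}\alpha_i$, $\gamma_j=\sum_{i=0}^{j-1}\alpha_i$ for $j=1,\ldots,n$, $B_i=\{j:\gamma_j=\gamma_i\}$, $\gamma_0=\max\{|\gamma_1|,\ldots,|\gamma_n|\}$, and $F=(c^{s^{\gamma_1}})^{\beta_1}\cdots(c^{s^{\gamma_n}})^{\beta_n}\in K^{\langle s\rangle}$, regarded as a function $\langle s\rangle\to K$. Then $w\in\phi(H)$ if and only if $\gamma=0$, $\sum_{j\in B_i}\beta_j=0$ for $i=1,\ldots,n$, $F(s^{\mu})=1$ for all integers $\mu\ne1$ with $|\mu|\le3\gamma_0$, and $F(s)\in\langle [z,b^{(i)}]\ :\ i\in\mathbb{N}\rangle$.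
   Context: Notation: $x^y=yxy^{-1}$, $[x,y]=xyx^{-1}y^{-1}$. For groups $A,B$, the wreath product $A\,\mathrm{Wr}\,B$ is the semidirect product $A^B\rtimes B$, where $A^B$ is the group of all functions $B\to A$ with pointwise multiplication and $B$ acts by $(bf)(x)=f(xb)$, written $f^b=bfb^{-1}$. $H$ is a group generated by a countable set $\{a^{(1)},a^{(2)},\ldots\}$. Let $Z=\langle z\rangle$ be infinite cyclic and $b^{(i)}\in H^Z$ with $b^{(i)}(z^k)=a^{(i)}$ if $k>0$ and $1$ otherwise; $K=\langle z,b^{(i)}\ (i\in\mathbb{N})\rangle\le H\,\mathrm{Wr}\,Z$. Let $\langle s\rangle$ be infinite cyclic and $c\in K^{\langle s\rangle}$ with $c(s)=z$, $c(s^{2^i})=b^{(i)}$ for $i>0$, $c(s^k)=1$ otherwise; $G=\langle c,s\rangle\le K\,\mathrm{Wr}\,\langle s\rangle$. The map $\phi:H\to G$, $a^{(i)}\mapsto[c,c^{s^{2^i-1}}]$, is an injective homomorphism. *)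

(* Defs.v *)
(* Possibly infinite groups are encoded by hand. *)
From mathcomp Require Import all_boot all_order all_algebra.
Set Implicit Arguments. Unset Strict Implicit. Unset Printing Implicit Defensive.
Import Order.TTheory GRing.Theory Num.Theory.
Local Open Scope ring_scope.

Record IGroup := {
  gcar :> Type;
  gmul : gcar -> gcar -> gcar;
  ginv : gcar -> gcar;
  gone : gcar;
  gmulA : forall x y z, gmul x (gmul y z) = gmul (gmul x y) z;
  gmul1x : forall x, gmul gone x = x;
  gmulVx : forall x, gmul (ginv x) x = gone }.

Section Ops.
Variables (T : Type) (mul : T -> T -> T) (inv : T -> T) (one : T).

Fixpoint gpown (x : T) (n : nat) : T :=
  match n with O => one | S n' => mul x (gpown x n') end.

Definition gpowz (x : T) (k : int) : T :=
  match k with Posz n => gpown x n | Negz n => inv (gpown x n.+1) end.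

Definition gconj (x y : T) : T := mul (mul y x) (inv y).
Definition gcomm (x y : T) : T := mul (mul (mul x y) (inv x)) (inv y).

Inductive gen (S : T -> Prop) : T -> Prop :=
| gen_base x : S x -> gen S x
| gen_one : gen S one
| gen_mul x y : gen S x -> gen S y -> gen S (mul x y)
| gen_inv x : gen S x -> gen S (inv x).
End Ops.

(* Unrestricted wreath product A Wr Z with Z = <z> infinite cyclic, z^k <-> k.
   An element (f, m) stands for f * z^m with f : Z -> A (all functions).
   (b f)(x) = f(x b), so (f,m)(g,n) = (k |-> f k * g (k+m), m+n). *)
Section Wreath.
Variables (A : Type) (mA : A -> A -> A) (iA : A -> A) (eA : A).
Definition wr : Type := ((int -> A) * int)%type.
Definition wmul (x y : wr) : wr :=
  (fun k => mA (x.1 k) (y.1 (k + x.2)), x.2 + y.2).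
Definition winv (x : wr) : wr := (fun k => iA (x.1 (k - x.2)), - x.2).
Definition wone : wr := (fun _ => eA, 0).
End Wreath.

Section Construction.
Variables (H : IGroup) (a : nat -> H).   (* a i = a^(i), used for i >= 1 *)

Definition A2 : Type := wr H.
Definition m2 : A2 -> A2 -> A2 := wmul (@gmul H).
Definition i2 : A2 -> A2 := winv (@ginv H).
Definition e2 : A2 := wone (gone H).

Definition zel : A2 := (fun _ => gone H, 1).
Definition bel (i : nat) : A2 := (fun k => if 0 < k then a i else gone H, 0).

(* (H Wr Z) Wr <s>; K Wr <s> is the subgroup of functions into K *)
Definition W : Type := wr A2.
Definition mW : W -> W -> W := wmul m2.
Definition iW : W -> W := winv i2.
Definition eW : W := wone e2.

Definition sel : W := (fun _ => e2, 1).
(* c(s) = z, c(s^(2^i)) = b^(i) for i > 0, c(s^k) = 1 otherwise *)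
Definition cfun (k : int) : A2 :=
  if k == 1 then zel else
  match k with
  | Posz m => if (2 ^ trunc_log 2 m == m)%N then bel (trunc_log 2 m) else e2
  | Negz _ => e2
  end.
Definition cel : W := (cfun, 0).

Definition powW := gpowz mW iW eW.
Definition conjW := gconj mW iW.
Definition commW := gcomm mW iW.

(* w = s^a0 c^b1 s^a1 ... c^bj s^aj  (prefix up to index j) *)
Fixpoint wprefix (alpha beta : nat -> int) (j : nat) : W :=
  match j with
  | O => powW sel (alpha 0%N)
  | S j' => mW (mW (wprefix alpha beta j') (powW cel (beta j))) (powW sel (alpha j))
  end.

Definition gam (alpha : nat -> int) (j : nat) : int := \sum_(i < j) alpha i.

Fixpoint Fprod (alpha beta : nat -> int) (j : nat) : W :=
  match j with
  | O => eW
  | S j' => mW (Fprod alpha beta j') (powW (conjW cel (powW sel (gam alpha j))) (beta j))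
  end.

End Construction.

(* Main.v *)
Require Import Defs.
From mathcomp Require Import all_boot all_order all_algebra.
From mathcomp Require Import zify.
From Stdlib Require Import FunctionalExtensionality Classical.
Import Order.TTheory GRing.Theory Num.Theory.
Local Open Scope ring_scope.
Set Implicit Arguments. Unset Strict Implicit. Unset Printing Implicit Defensive.

Section G.
Variables (T : Type) (mul : T -> T -> T) (inv : T -> T) (one : T).
Hypothesis mulA : forall x y z, mul x (mul y z) = mul (mul x y) z.
Hypothesis mul1 : forall x, mul one x = x.
Hypothesis mulV : forall x, mul (inv x) x = one.

Lemma mulxV x : mul x (inv x) = one.
Proof.
rewrite -{1}[mul x (inv x)]mul1 -(mulV (inv x)) -mulA (mulA (inv x)) mulV mul1.
by rewrite mulV.
Qed.
Lemma mulx1 x : mul x one = x.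
Proof. by rewrite -(mulV x) mulA mulxV mul1. Qed.
Lemma mulKl x y : mul (inv x) (mul x y) = y.
Proof. by rewrite mulA mulV mul1. Qed.
Lemma mulKr x y : mul x (mul (inv x) y) = y.
Proof. by rewrite mulA mulxV mul1. Qed.
Lemma mul_cancel x y z : mul x y = mul x z -> y = z.
Proof. by move=> h; rewrite -(mulKl x y) h mulKl. Qed.
Lemma invinv x : inv (inv x) = x.
Proof. by apply: (@mul_cancel (inv x)); rewrite mulxV mulV. Qed.
Lemma inv1 : inv one = one.
Proof. by rewrite -{2}(mulV one) mulx1. Qed.
Lemma invM x y : inv (mul x y) = mul (inv y) (inv x).
Proof.
apply: (@mul_cancel (mul x y)); rewrite mulxV -mulA (mulA y) mulxV mul1 mulxV //.
Qed.
Lemma idem1 x : mul x x = x -> x = one.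
Proof. by move=> h; have := mulKl x x; rewrite h mulV. Qed.

Notation pn := (gpown mul one).
Notation pz := (gpowz mul inv one).

Lemma pnS' x n : pn x n.+1 = mul (pn x n) x.
Proof.
elim: n => [|n IH] /=; first by rewrite mulx1 mul1.
move: IH => /= IH; by rewrite IH mulA IH.
Qed.
Lemma pz_pos x (n : nat) : pz x n = pn x n. Proof. by []. Qed.
Lemma pzS x a : pz x (a + 1) = mul (pz x a) x.
Proof.
case: a => n.
  have -> : Posz n + 1 = Posz n.+1 by rewrite -addn1.
  by rewrite !pz_pos pnS'.
case: n => [|n].
  have -> : Negz 0 + 1 = 0 by [].
  by rewrite /= mulx1 mulV.
have -> : Negz n.+1 + 1 = Negz n by rewrite !NegzE; lia.
rewrite /=.
by rewrite (invM x (mul x _)) -mulA mulV mulx1.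
Qed.
Lemma pzP x a : pz x (a - 1) = mul (pz x a) (inv x).
Proof.
by rewrite -{2}(subrK 1 a) pzS -mulA mulxV mulx1.
Qed.
Lemma pz_add x a b : pz x (a + b) = mul (pz x a) (pz x b).
Proof.
elim/int_rec: b => [|n IH|n IH].
- by rewrite addr0 /= mulx1.
- have -> : Posz n.+1 = Posz n + 1 by rewrite -addn1.
  by rewrite addrA !pzS IH mulA.
  have -> : - (Posz n.+1) = - (Posz n) - 1 by lia.
  by rewrite addrA !pzP IH mulA.
Qed.
Lemma pn1 n : pn one n = one.
Proof. by elim: n => //= n ->; rewrite mul1. Qed.
Lemma pz1 k : pz one k = one.
Proof. case: k => n; first exact: pn1. by rewrite /gpowz (pn1 n.+1) inv1. Qed.
Lemma pz0 x : pz x 0 = one. Proof. by []. Qed.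

End G.

Section Hom.
Variables (T : Type) (mul : T -> T -> T) (inv : T -> T) (one : T).
Hypothesis mulA : forall x y z, mul x (mul y z) = mul (mul x y) z.
Hypothesis mul1 : forall x, mul one x = x.
Hypothesis mulV : forall x, mul (inv x) x = one.
Variables (U : Type) (mul' : U -> U -> U) (inv' : U -> U) (one' : U).
Hypothesis mulA' : forall x y z, mul' x (mul' y z) = mul' (mul' x y) z.
Hypothesis mul1' : forall x, mul' one' x = x.
Hypothesis mulV' : forall x, mul' (inv' x) x = one'.
Variable f : T -> U.
Hypothesis fM : forall x y, f (mul x y) = mul' (f x) (f y).

Lemma hom1 : f one = one'.
Proof.
apply: (idem1 mulA' mul1' mulV'); by rewrite -fM mul1.
Qed.
Lemma homV x : f (inv x) = inv' (f x).
Proof.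
apply: (mul_cancel mulA' mul1' mulV' (x := f x)).
by rewrite -fM (mulxV mulA mul1 mulV) hom1 (mulxV mulA' mul1' mulV').
Qed.
Lemma hompz x k : f (gpowz mul inv one x k) = gpowz mul' inv' one' (f x) k.
Proof.
have hn : forall n, f (gpown mul one x n) = gpown mul' one' (f x) n.
  by elim=> [|n IH] /=; rewrite ?hom1 // fM IH.
by case: k => n; rewrite /gpowz ?homV hn.
Qed.
End Hom.
Section Int.
Lemma intA (x y z : int) : x + (y + z) = x + y + z. Proof. exact: addrA. Qed.
Lemma int1 (x : int) : 0 + x = x. Proof. exact: add0r. Qed.
Lemma intV (x : int) : - x + x = 0. Proof. exact: addNr. Qed.
Lemma pz_int (x k : int) : gpowz +%R -%R 0 x k = x * k.
Proof.
have hn : forall n, gpown +%R 0 x n = x *+ n.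
  elim=> [|n IH]; first by rewrite mulr0n.
  by rewrite /= IH mulrS.
case: k => n; rewrite /gpowz.
  by rewrite hn -mulr_natr natz.
rewrite hn NegzE mulrN -mulr_natr natz. done.
Qed.
End Int.

Section Pt.
Variables (A : Type) (m : A -> A -> A) (i : A -> A) (e : A).
Hypothesis mA : forall x y z, m x (m y z) = m (m x y) z.
Hypothesis m1 : forall x, m e x = x.
Hypothesis mV : forall x, m (i x) x = e.
Definition ptm (f g : int -> A) := fun k => m (f k) (g k).
Definition pti (f : int -> A) := fun k => i (f k).
Definition pte : int -> A := fun _ => e.
Lemma ptA x y z : ptm x (ptm y z) = ptm (ptm x y) z.
Proof. by apply: functional_extensionality => k; rewrite /ptm mA. Qed.
Lemma pt1 x : ptm pte x = x.
Proof. by apply: functional_extensionality => k; rewrite /ptm m1. Qed.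
Lemma ptV x : ptm (pti x) x = pte.
Proof. by apply: functional_extensionality => k; rewrite /ptm mV. Qed.
Lemma pt_pz f b : gpowz ptm pti pte f b = fun k => gpowz m i e (f k) b.
Proof.
apply: functional_extensionality => k.
exact: (hompz ptA pt1 ptV mA m1 mV (f := fun g => g k)).
Qed.

Notation wm := (wmul m). Notation wi := (winv i). Notation we := (wone e).
Lemma wA x y z : wm x (wm y z) = wm (wm x y) z.
Proof.
rewrite /wmul /=; congr pair; last exact: addrA.
by apply: functional_extensionality => k; rewrite mA addrA.
Qed.
Lemma w1 x : wm we x = x.
Proof.
case: x => f n; rewrite /wmul /=; congr pair; last exact: add0r.
by apply: functional_extensionality => k; rewrite m1 addr0.
Qed.
Lemma wV x : wm (wi x) x = we.
Proof.
case: x => f n; rewrite /wmul /winv /wone /=; congr pair; last exact: addNr.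
by apply: functional_extensionality => k; rewrite mV.
Qed.

Lemma wm_base f g : wm (f, 0) (g, 0) = (ptm f g, 0).
Proof.
rewrite /wmul /=; congr pair.
by apply: functional_extensionality => k; rewrite addr0.
Qed.
Lemma wi_base f : wi (f, 0) = (pti f, 0).
Proof.
rewrite /winv /=; congr pair.
by apply: functional_extensionality => k; rewrite subr0.
Qed.
Lemma wpz_base f b : gpowz wm wi we (f, 0) b = (fun k => gpowz m i e (f k) b, 0).
Proof.
rewrite -pt_pz; symmetry.
apply: (hompz ptA pt1 ptV wA w1 wV (f := fun g => (g, 0))).
by move=> x y; rewrite wm_base.
Qed.
Lemma wpz_shift (g : int) : gpowz wm wi we (fun _ => e, 1) g = (fun _ => e, g).
Proof.
have := (hompz intA int1 intV wA w1 wV (f := fun k => (fun _ => e, k))).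
move=> <-; first by rewrite pz_int mul1r.
move=> x y; rewrite /wmul /=; congr pair.
by apply: functional_extensionality => k; rewrite m1.
Qed.
Lemma wconj_base f g : gconj wm wi (f, 0) (fun _ => e, g) = (fun k => f (k + g), 0).
Proof.
rewrite /gconj /wmul /winv /=; congr pair; last by rewrite addr0 addrN.
apply: functional_extensionality => k.
by rewrite m1 (inv1 mA m1 mV) (mulx1 mA m1 mV).
Qed.
Lemma wmul_shift f g : wm (f, 0) (fun _ => e, g) = (f, g).
Proof.
rewrite /wmul /=; congr pair; last by rewrite add0r.
by apply: functional_extensionality => k; rewrite (mulx1 mA m1 mV).
Qed.
Lemma wcomm_base f g :
  gcomm wm wi (f, 0) (g, 0) = (fun k => gcomm m i (f k) (g k), 0).
Proof. by rewrite /gcomm wm_base wi_base wm_base wi_base wm_base. Qed.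
End Pt.
Section GExtra.
Variables (T : Type) (mul : T -> T -> T) (inv : T -> T) (one : T).
Hypothesis mulA : forall x y z, mul x (mul y z) = mul (mul x y) z.
Hypothesis mul1 : forall x, mul one x = x.
Hypothesis mulV : forall x, mul (inv x) x = one.
Lemma comm1x y : gcomm mul inv one y = one.
Proof. by rewrite /gcomm mul1 (inv1 mulA mul1 mulV) (mulx1 mulA mul1 mulV) (mulxV mulA mul1 mulV). Qed.
Lemma commx1 x : gcomm mul inv x one = one.
Proof. by rewrite /gcomm (inv1 mulA mul1 mulV) !(mulx1 mulA mul1 mulV) (mulxV mulA mul1 mulV). Qed.
Lemma conj_pz x y b :
  gpowz mul inv one (gconj mul inv x y) b = gconj mul inv (gpowz mul inv one x b) y.
Proof.
symmetry; apply: (hompz mulA mul1 mulV mulA mul1 mulV (f := fun x => gconj mul inv x y)).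
move=> u v; rewrite /gconj -!mulA; congr (mul y _).
by rewrite (mulA (inv y)) mulV mul1.
Qed.
Lemma mul_pz_conj x y b :
  mul y (gpowz mul inv one x b) = mul (gpowz mul inv one (gconj mul inv x y) b) y.
Proof.
by rewrite conj_pz /gconj -mulA mulV (mulx1 mulA mul1 mulV).
Qed.
End GExtra.
Section Spec.
Variables (H : IGroup) (a : nat -> H).

Lemma m2A (x y z : A2 H) : m2 x (m2 y z) = m2 (m2 x y) z.
Proof. exact: (wA (@gmulA H)). Qed.
Lemma m21 (x : A2 H) : m2 (e2 H) x = x.
Proof. exact: (w1 (@gmul1x H)). Qed.
Lemma m2V (x : A2 H) : m2 (i2 x) x = e2 H.
Proof. exact: (wV (@gmulVx H)). Qed.
Lemma mWA (x y z : W H) : mW x (mW y z) = mW (mW x y) z.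
Proof. exact: (wA m2A). Qed.
Lemma mW1 (x : W H) : mW (eW H) x = x.
Proof. exact: (w1 m21). Qed.
Lemma mWV (x : W H) : mW (iW x) x = eW H.
Proof. exact: (wV m2V). Qed.

Lemma shiftE (g : int) : powW (sel H) g = (fun _ => e2 H, g).
Proof. exact: (wpz_shift m2A m21 m2V g). Qed.
Lemma conjE (f : int -> A2 H) g : conjW (f, 0) (powW (sel H) g) = (fun k => f (k + g), 0).
Proof. rewrite shiftE; exact: (wconj_base m2A m21 m2V). Qed.
Lemma powbaseE (f : int -> A2 H) b :
  powW (f, 0) b = (fun k => gpowz (@m2 H) (@i2 H) (e2 H) (f k) b, 0).
Proof. exact: (wpz_base m2A m21 m2V). Qed.

Fixpoint Ff (alpha beta : nat -> int) (j : nat) : int -> A2 H :=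
  match j with
  | O => fun _ => e2 H
  | S j' => fun mu => m2 (Ff alpha beta j' mu)
              (gpowz (@m2 H) (@i2 H) (e2 H) (cfun a (mu + gam alpha j)) (beta j))
  end.

Lemma FprodE alpha beta j : Fprod a alpha beta j = (Ff alpha beta j, 0).
Proof.
elim: j => [|j IH] //=.
rewrite IH /cel conjE powbaseE.
exact: wm_base.
Qed.

Lemma gamS alpha j : gam alpha j.+1 = gam alpha j + alpha j.
Proof. by rewrite /gam big_ord_recr. Qed.

Lemma wprefixE alpha beta j :
  wprefix a alpha beta j = (Ff alpha beta j, gam alpha j.+1).
Proof.
suff -> : wprefix a alpha beta j = mW (Fprod a alpha beta j) (powW (sel H) (gam alpha j.+1)).
  rewrite FprodE shiftE; exact: (wmul_shift m2A m21 m2V).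
elim: j => [|j IH].
  by rewrite /= mW1 /gam big_ord_recr big_ord0 /= add0r.
rewrite /= IH -mWA -mWA -[RHS]mWA; congr (mW _ _).
rewrite /powW mWA (mul_pz_conj mWA mW1 mWV (cel a)) -mWA; congr (mW _ _).
rewrite [gam _ j.+2]gamS; exact/esym/(pz_add mWA mW1 mWV).
Qed.

Definition delta (x : A2 H) : int -> A2 H := fun k => if k == 1 then x else e2 H.

Lemma cfun1 : cfun a 1 = zel H.
Proof. by rewrite /cfun eqxx. Qed.
Lemma cfun_pow i : (0 < i)%N -> cfun a (Posz (2 ^ i)) = bel a i.
Proof.
move=> hi; rewrite /cfun.
have -> : (Posz (2 ^ i) == 1) = false.
  apply/negbTE; rewrite eqz_nat; apply/eqP => h.
  by move: (ltn_exp2l 0 i (isT : (1 < 2)%N)); rewrite hi h.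
by rewrite trunc_expnK // eqxx.
Qed.
Lemma cfun_cases k :
  cfun a k = e2 H \/ k = 1 \/ exists2 t, (0 < t)%N & k = Posz (2 ^ t).
Proof.
rewrite /cfun; case: eqP => [->|hk]; first by right; left.
case: k hk => [m|m] hk; last by left.
case: eqP => h; last by left.
right; right; exists (trunc_log 2 m); last by rewrite h.
rewrite lt0n; apply/eqP => h0; apply: hk; by rewrite -h h0.
Qed.
Lemma cfun2 k : (cfun a k).2 = if k == 1 then 1 else 0.
Proof.
rewrite /cfun; case: eqP => // _.
by case: k => // m; case: eqP.
Qed.
Lemma cfun_neg k : k <= 0 -> cfun a k = e2 H.
Proof.
move=> hk; case: (cfun_cases k) => [//|[h|[t _ h]]]; subst k => //.
by move: hk; rewrite lez_nat leqn0 expn_eq0.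
Qed.

End Spec.
Section Spec2.
Variables (H : IGroup) (a : nat -> H).

Definition CS (x : A2 H) :=
  exists2 i, (0 < i)%N & x = gcomm (@m2 H) (@i2 H) (zel H) (bel a i).
Definition Cgen := gen (@m2 H) (@i2 H) (e2 H) CS.

Lemma pz2 (x : A2 H) b : (gpowz (@m2 H) (@i2 H) (e2 H) x b).2 = x.2 * b.
Proof.
rewrite (hompz (@m2A H) (@m21 H) (@m2V H) intA int1 intV (f := snd)) //.
exact: pz_int.
Qed.

Lemma Cgen2 x : Cgen x -> x.2 = 0.
Proof.
elim => //=.
- move=> y [i _ ->] /=; rewrite /=; lia.
- by move=> y z _ -> _ ->.
- by move=> y _ ->.
Qed.

Lemma Ff2 alpha beta J mu :
  (Ff a alpha beta J mu).2 = \sum_(1 <= j < J.+1 | mu + gam alpha j == 1) beta j.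
Proof.
elim: J => [|J IH]; first by rewrite big_geq.
rewrite big_mkcond big_nat_recr //= -big_mkcond -IH pz2 cfun2.
by case: ifP => _; rewrite ?mul1r ?mul0r.
Qed.

Lemma Ff_one alpha beta mu P0 J :
  (forall j, (1 <= j <= J)%N -> mu + gam alpha j = P0 \/ cfun a (mu + gam alpha j) = e2 H) ->
  Ff a alpha beta J mu =
  gpowz (@m2 H) (@i2 H) (e2 H) (cfun a P0)
        (\sum_(1 <= j < J.+1 | mu + gam alpha j == P0) beta j).
Proof.
elim: J => [|J IH] hyp; first by rewrite big_geq.
rewrite big_mkcond big_nat_recr //= -big_mkcond IH; last first.
  by move=> j /andP[h1 h2]; apply: hyp; rewrite h1 (leq_trans h2).
case: eqP => h.
  by rewrite h -(pz_add (@m2A H) (@m21 H) (@m2V H)).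
case: (hyp J.+1) => //; first by rewrite leqnn.
move=> ->; rewrite (pz1 (@m2A H) (@m21 H) (@m2V H)) (mulx1 (@m2A H) (@m21 H) (@m2V H)).
by rewrite addr0.
Qed.


Lemma deltaM x y : ptm (@m2 H) (delta x) (delta y) = delta (m2 x y).
Proof.
apply: functional_extensionality => k; rewrite /ptm /delta.
by case: (k == 1) => //; rewrite m21.
Qed.
Lemma deltaV x : pti (@i2 H) (delta x) = delta (i2 x).
Proof.
apply: functional_extensionality => k; rewrite /pti /delta.
by case: (k == 1) => //; rewrite (inv1 (@m2A H) (@m21 H) (@m2V H)).
Qed.
Lemma delta1 : eW H = (delta (e2 H), 0).
Proof.
rewrite /eW /wone; congr pair.
by apply: functional_extensionality => k; rewrite /delta; case: (k == 1).
Qed.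

Lemma notboth k i : k != 1 -> (0 < i)%N ->
  cfun a k = e2 H \/ cfun a (k + ((2 ^ i)%:Z - 1)) = e2 H.
Proof.
move=> hk hi.
case: (cfun_cases a k) => [h|[h|[t ht hk']]]; first by left.
  by rewrite h eqxx in hk.
right; subst k; clear hk.
case: (cfun_cases a (Posz (2 ^ t) + ((2 ^ i)%:Z - 1))) => [//|[h|[u hu h]]]; exfalso.
  move: ht hi h; case: t => // t; case: i => // i _ _.
  rewrite !expnS; have := expn_gt0 2 t; have := expn_gt0 2 i; lia.
move: ht hi hu h; case: t => // t; case: i => // i; case: u => // u _ _ _.
rewrite !expnS; lia.
Qed.

Variable phi : H -> W H.
Hypothesis phi_hom : forall x y : H, phi (gmul x y) = mW (phi x) (phi y).
Hypothesis phi_a : forall i : nat, (0 < i)%N ->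
     phi (a i) = commW (cel a) (conjW (cel a) (powW (sel H) ((2 ^ i)%:Z - 1))).

Lemma phi1 : phi (gone H) = eW H.
Proof. exact: (hom1 (@gmul1x H) (@mWA H) (@mW1 H) (@mWV H) phi_hom). Qed.
Lemma phiV x : phi (ginv x) = iW (phi x).
Proof. exact: (homV (@gmulA H) (@gmul1x H) (@gmulVx H) (@mWA H) (@mW1 H) (@mWV H) phi_hom). Qed.

Lemma phi_aE i : (0 < i)%N ->
  phi (a i) = (delta (gcomm (@m2 H) (@i2 H) (zel H) (bel a i)), 0).
Proof.
move=> hi; rewrite phi_a // /cel conjE /commW /mW /iW wcomm_base.
congr pair; apply: functional_extensionality => k.
rewrite /ptm /pti /delta; case: eqP => [->|hk].
  have -> : 1 + ((2 ^ i)%:Z - 1) = Posz (2 ^ i) by rewrite addrC subrK.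
  by rewrite cfun1 cfun_pow.
have hk' : k != 1 by apply/eqP.
case: (notboth hk' hi) => ->.
  exact: (comm1x (@m2A H) (@m21 H) (@m2V H)).
exact: (commx1 (@m2A H) (@m21 H) (@m2V H)).
Qed.

End Spec2.
Lemma arith (mu gi gj : int) (M : nat) :
  (3 * M < `|mu|%N)%N -> mu != 1 -> (`|gi|%N <= M)%N -> (`|gj|%N <= M)%N ->
  (mu + gi = 1 \/ exists2 t, (0 < t)%N & mu + gi = Posz (2 ^ t)) ->
  (mu + gj = 1 \/ exists2 t, (0 < t)%N & mu + gj = Posz (2 ^ t)) ->
  mu + gi = mu + gj.
Proof.
move=> hM /eqP hmu hi hj ci cj.
have one_ok : forall g, (`|g|%N <= M)%N -> mu + g <> 1.
  move=> g hg h; lia.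
case: ci => [h|[t ht hti]]; first by case: (one_ok gi hi h).
case: cj => [h|[u hu htj]]; first by case: (one_ok gj hj h).
have X1 : (1 <= 2 ^ t)%N by rewrite expn_gt0.
have Y1 : (1 <= 2 ^ u)%N by rewrite expn_gt0.
case: (ltngtP t u) => htu; last by rewrite hti htj htu.
- have : (2 * 2 ^ t <= 2 ^ u)%N by rewrite -expnS leq_pexp2l.
  move: hti htj X1 Y1; set X := (2 ^ t)%N; set Y := (2 ^ u)%N; lia.
- have : (2 * 2 ^ u <= 2 ^ t)%N by rewrite -expnS leq_pexp2l.
  move: hti htj X1 Y1; set X := (2 ^ t)%N; set Y := (2 ^ u)%N; lia.
Qed.

Section Main.
Variables (H : IGroup) (a : nat -> H).
Variable phi : H -> W H.
Hypothesis Hgen : forall x : H,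
     gen (@gmul H) (@ginv H) (gone H) (fun y => exists2 i, (0 < i)%N & y = a i) x.
Hypothesis phi_hom : forall x y : H, phi (gmul x y) = mW (phi x) (phi y).
Hypothesis phi_a : forall i : nat, (0 < i)%N ->
     phi (a i) = commW (cel a) (conjW (cel a) (powW (sel H) ((2 ^ i)%:Z - 1))).

Lemma phi_img h : exists2 x, Cgen a x & phi h = (delta x, 0).
Proof.
elim: (Hgen h) => {h}.
- move=> y [i hi ->]; exists (gcomm (@m2 H) (@i2 H) (zel H) (bel a i)).
    by apply: gen_base; exists i.
  exact: phi_aE.
- exists (e2 H); first exact: gen_one.
  by rewrite (phi1 phi_hom) delta1.
- move=> x y _ [x1 g1 ex] _ [y1 g2 ey]; exists (m2 x1 y1); first exact: gen_mul.
  by rewrite phi_hom ex ey /mW wm_base deltaM.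
- move=> x _ [x1 g1 ex]; exists (i2 x1); first exact: gen_inv.
  by rewrite (phiV phi_hom) ex /iW wi_base deltaV.
Qed.

Lemma phi_pre x : Cgen a x -> exists h, phi h = (delta x, 0).
Proof.
elim.
- move=> y [i hi ->]; exists (a i); exact: phi_aE.
- by exists (gone H); rewrite (phi1 phi_hom) delta1.
- move=> x1 y1 _ [h1 ex] _ [h2 ey]; exists (gmul h1 h2).
  by rewrite phi_hom ex ey /mW wm_base deltaM.
- move=> x1 _ [h1 ex]; exists (ginv h1).
  by rewrite (phiV phi_hom) ex /iW wi_base deltaV.
Qed.
End Main.
Theorem lemma6
  (H : IGroup) (a : nat -> H)
  (Hgen : forall x : H,
     gen (@gmul H) (@ginv H) (gone H) (fun y => exists2 i, (0 < i)%N & y = a i) x)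
  (phi : H -> W H)
  (phi_hom : forall x y : H, phi (gmul x y) = mW (phi x) (phi y))
  (phi_a : forall i : nat, (0 < i)%N ->
     phi (a i) = commW (cel a) (conjW (cel a) (powW (sel H) ((2 ^ i)%:Z - 1))))
  (n : nat) (alpha beta : nat -> int)
  (hn : (1 <= n)%N)
  (halpha : forall i : nat, (0 < i < n)%N -> alpha i != 0)
  (hbeta : forall j : nat, (1 <= j <= n)%N -> beta j != 0) :
  (exists h : H, phi h = wprefix a alpha beta n) <->
  [/\ \sum_(i < n.+1) alpha i = 0,
      (forall i : nat, (1 <= i <= n)%N ->
         \sum_(1 <= j < n.+1 | gam alpha j == gam alpha i) beta j = 0),
      (forall mu : int, mu != 1 ->
         (`|mu|%N <= 3 * \max_(1 <= j < n.+1) `|gam alpha j|%N)%N ->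
         (Fprod a alpha beta n).1 mu = e2 H)
    & gen (@m2 H) (@i2 H) (e2 H)
        (fun x => exists2 i, (0 < i)%N & x = gcomm (@m2 H) (@i2 H) (zel H) (bel a i))
        ((Fprod a alpha beta n).1 1)].
Proof.
rewrite wprefixE FprodE /=.
set F := Ff a alpha beta n.
set M := \max_(1 <= j < n.+1) `|gam alpha j|%N.
have hg : forall j, (1 <= j <= n)%N -> (`|gam alpha j|%N <= M)%N.
  move=> j hj; rewrite /M; apply: (@leq_bigmax_seq _ (index_iota 1 n.+1) xpredT (fun j => `|gam alpha j|%N) j) => //.
  by rewrite mem_index_iota ltnS.
split.
- move=> [h hh].
  have [x gx ex] := phi_img Hgen phi_hom phi_a h.
  rewrite ex in hh; case: hh => hF hgam.
  have Fmu : forall mu, mu != 1 -> F mu = e2 H.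
    by move=> mu hmu; rewrite -hF /delta (negbTE hmu).
  have F1 : F 1 = x by rewrite -hF /delta eqxx.
  split.
  + by move: hgam; rewrite /gam => <-.
  + move=> i hi.
    rewrite (eq_bigl (fun j => (1 - gam alpha i) + gam alpha j == 1)); last first.
      by move=> j; apply/eqP/eqP => h'; lia.
    rewrite -(Ff2 a) -/F.
    case: (eqVneq (gam alpha i) 0) => h0.
      by rewrite h0 subr0 F1 (Cgen2 gx).
    rewrite Fmu //; apply/eqP => h'; move/eqP: h0; lia.
  + by move=> mu hmu _; exact: Fmu.
  + by rewrite F1.
- case=> hsum hB hsmall hC.
  have hall : forall mu, mu != 1 -> F mu = e2 H.
    move=> mu hmu.
    case: (leqP `|mu|%N (3 * M)) => hle; first exact: hsmall.
    case: (classic (exists2 i0, (1 <= i0 <= n)%N & cfun a (mu + gam alpha i0) <> e2 H)).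
    + move=> [i0 hi0 hne].
      rewrite /F (@Ff_one _ a alpha beta mu (mu + gam alpha i0)); last first.
        move=> j hj.
        case: (classic (cfun a (mu + gam alpha j) = e2 H)) => [->|hnej]; first by right.
        left; apply: (arith hle hmu (hg j hj) (hg i0 hi0)).
          by case: (cfun_cases a (mu + gam alpha j)) => [//|[h|h]]; [left|right].
        by case: (cfun_cases a (mu + gam alpha i0)) => [//|[h|h]]; [left|right].
      rewrite (eq_bigl (fun j => gam alpha j == gam alpha i0)); last first.
        by move=> j; apply/eqP/eqP => h'; lia.
      by rewrite hB.
    + move=> hno.
      rewrite /F (@Ff_one _ a alpha beta mu 0); last first.
        move=> j hj; right.
        case: (classic (cfun a (mu + gam alpha j) = e2 H)) => // hnej.
        by case: hno; exists j.
      by rewrite cfun_neg // (pz1 (@m2A H) (@m21 H) (@m2V H)).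
  have [h eh] := phi_pre phi_hom phi_a hC.
  exists h; rewrite eh; congr pair; last by rewrite /gam hsum.
  apply: functional_extensionality => mu; rewrite /delta.
  case: eqP => [->|/eqP hmu] //; by rewrite hall.
Qed.
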